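(* Let $n\geq2$ and let $A=(a_{i,j})$ be a nonnegative $2\times n$ matrix with $a_{2,k}=0$ for $2\leq k\leq n$. Let $A'=(a'_{i,j})$ be the $2\times n$ matrix with $a'_{1,1}=\sum_{k=1}^n a_{1,k}$, $a'_{1,k}=0$ for $2\le k\le n$, $a'_{2,1}=a_{2,1}-\sum_{k=2}^n a_{1,k}$, and $a'_{2,k}=a_{1,k}$ for $2\leq k\leq n$. If $\sum_{k=2}^n a_{1,k}\leq a_{2,1}\leq\sum_{k=1}^n a_{1,k}$, then $H(A)\geq H(A')$.
   Context: For a nonnegative matrix $A$, $H(A)=-\sum_{i,j}a_{i,j}\log a_{i,j}$ with the convention $0\log0=0$. *)

(* Defs.v *)
From mathcomp Require Import all_boot all_order all_algebra.
From mathcomp Require Import all_classical all_reals all_analysis.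
Set Implicit Arguments. Unset Strict Implicit. Unset Printing Implicit Defensive.
Import Order.TTheory GRing.Theory Num.Theory.
Local Open Scope ring_scope.

Definition xlogx (R : realType) (x : R) : R := if x == 0 then 0 else x * ln x.

Definition Hent (R : realType) (m n : nat) (A : 'M[R]_(m, n)) : R :=
  - \sum_(i < m) \sum_(j < n) xlogx (A i j).

(* The transformed matrix A' (indices 0-based: row 0 = row 1 of the paper). *)
Definition transf (R : realType) (n : nat) (A : 'M[R]_(2, n.+1)) : 'M[R]_(2, n.+1) :=
  \matrix_(i < 2, j < n.+1)
    if i == 0 then
      (if j == ord0 then \sum_(k < n.+1) A 0 k else 0)
    else
      (if j == ord0 then A 1 ord0 - \sum_(k < n.+1 | k != ord0) A 0 k
       else A 0 j).

(* Main.v *)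
Require Import Defs.
From mathcomp Require Import all_boot all_order all_algebra.
From mathcomp Require Import all_classical all_reals all_analysis.
From mathcomp Require Import lra.
Import Order.TTheory GRing.Theory Num.Theory.
Local Open Scope ring_scope.

Lemma tangent (R : realType) (u v : R) : 0 <= u -> 0 < v ->
  xlogx v + (1 + ln v) * (u - v) <= xlogx u.
Proof.
move=> u0 v0; rewrite /xlogx (negbTE (lt0r_neq0 v0)).
have [->|un0] := eqVneq u 0; first by rewrite ?eqxx; lra.
have up : 0 < u by rewrite lt0r un0.
rewrite ?(negbTE un0).
have h : ln (1 + (v / u - 1)) <= v / u - 1 by apply: le_ln1Dx; rewrite ltrBrDl addrN divr_gt0.
rewrite addrC subrK ln_div ?posrE // in h.
have h2 : u * (ln v - ln u) <= u * (v / u - 1) by rewrite ler_pM2l.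
rewrite mulrBr mulrBr mulrCA divff ?mulr1 ?(lt0r_neq0 up) // in h2.
nra.
Qed.

Lemma key (R : realType) (a s x : R) : 0 <= x -> x <= a -> 0 <= s ->
  xlogx a + xlogx (x + s) <= xlogx (a + s) + xlogx x.
Proof.
move=> x0 xa s0.
have [->|sn0] := eqVneq s 0; first by rewrite !addr0 addrC.
have sp : 0 < s by rewrite lt0r sn0.
have xsp : 0 < x + s by lra.
have [xsa|axs] := lerP (x + s) a.
  have ap : 0 < a by lra.
  have t1 := @tangent R _ _ (addr_ge0 (ltW ap) s0) ap.
  have t2 := @tangent R _ _ x0 xsp.
  have : ln (x + s) <= ln a by rewrite ler_ln ?posrE.
  move=> hl; have hm : (ln (x+s)) * s <= ln a * s by rewrite ler_pM2r.
  lra.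
have [a0|an0] := eqVneq a 0.
  have -> : x = 0 by lra.
  rewrite a0.
  by rewrite add0r addrC.
have ap : 0 < a by rewrite lt0r an0 (le_trans x0 xa).
have t1 := @tangent R _ _ (addr_ge0 (ltW ap) s0) xsp.
have t2 := @tangent R _ _ x0 ap.
have : ln a <= ln (x + s) by rewrite ler_ln ?posrE // ltW.
move=> hl; have hm : ln a * (a - x) <= ln (x+s) * (a - x) by rewrite ler_wpM2r // subr_ge0.
lra.
Qed.

Theorem lemma2p1 (R : realType) (n : nat) (A : 'M[R]_(2, n.+1)) :
  (1 <= n)%N ->
  (forall i j, 0 <= A i j) ->
  (forall k : 'I_n.+1, k != ord0 -> A 1 k = 0) ->
  \sum_(k < n.+1 | k != ord0) A 0 k <= A 1 ord0 ->
  A 1 ord0 <= \sum_(k < n.+1) A 0 k ->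
  Hent (transf A) <= Hent A.
Proof.
move=> _ A0 A1 h1 h2.
have H2 : forall F : 'I_2 -> R, \sum_(i<2) F i = F 0 + F 1.
  by move=> F; rewrite big_ord_recl big_ord1; congr (_ + F _); apply/val_inj.
set s := \sum_(k < n.+1 | k != ord0) A 0 k.
have E1 : \sum_(k < n.+1) A 0 k = A 0 ord0 + s by rewrite (bigD1 ord0).
have f0 : xlogx (0:R) = 0 by rewrite /xlogx eqxx.
have row : forall F : 'I_n.+1 -> R, \sum_j F j = F ord0 + \sum_(j | j != ord0) F j.
  by move=> F; rewrite (bigD1 ord0).
rewrite /Hent !H2 lerN2 !row.
rewrite !mxE E1 /=.
rewrite -/s.
have S1 : \sum_(j|j!=ord0) xlogx (A 1 j) = 0 by rewrite big1 // => j /A1 ->; exact f0.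
have S2 : \sum_(j|j!=ord0) xlogx (transf A 0 j) = 0.
  by rewrite big1 // => j /negbTE hj; rewrite mxE /= hj f0.
have S3 : \sum_(j|j!=ord0) xlogx (transf A 1 j) = \sum_(j|j!=ord0) xlogx (A 0 j).
  by apply: eq_bigr => j /negbTE hj; rewrite mxE /= hj.
rewrite S1 S2 S3.
have s0 : 0 <= s by apply: sumr_ge0.
rewrite E1 in h2.
have := @key R (A 0 ord0) s (A 1 ord0 - s).
rewrite subrK.
move=> /(_ _ _ s0).
have ha : 0 <= A 1 ord0 - s by rewrite subr_ge0.
have hb : A 1 ord0 - s <= A 0 ord0 by rewrite lerBlDr.
move=> /(_ ha hb).
set T := \sum_(j|j!=ord0) xlogx (A 0 j).
lra.
Qed.
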